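(* Let $\mathcal{SP}$ be the class of split graphs. Then: (i) $R_1^{\mathcal{SP}}(4,5)=7$ and $R_1^{\mathcal{SP}}(4,6)=8$; (ii) $R_2^{\mathcal{SP}}(6,7)=11$ and $R_2^{\mathcal{SP}}(6,8)=12$; (iii) $R_2^{\mathcal{SP}}(5,6)=8$ and $R_2^{\mathcal{SP}}(5,7)=9$; (iv) $R_2^{\mathcal{SP}}(5,j)=j+3$ for all integers $8\leq j\leq 12$.
   Context: All graphs are finite and simple. For a graph $G$ and a nonnegative integer $k$, a $k$-sparse $j$-set is a set of $j$ vertices of $G$ inducing a subgraph of maximum degree at most $k$; a $k$-dense $i$-set is a set of $i$ vertices of $G$ that is $k$-sparse in the complement of $G$. For a graph class $\mathcal{G}$, $R_k^{\mathcal{G}}(i,j)$ is the smallest natural number $n$ such that every graph on $n$ vertices in $\mathcal{G}$ has either a $k$-dense $i$-set or a $k$-sparse $j$-set. A split graph is a graph whose vertex set can be partitioned into a clique and an independent set. *)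

(* Defs.v *)
From mathcomp Require Import all_boot.
Set Implicit Arguments. Unset Strict Implicit. Unset Printing Implicit Defensive.

Definition simple_graph (n : nat) (e : rel 'I_n) : Prop :=
  symmetric e /\ irreflexive e.

Definition compl_graph (n : nat) (e : rel 'I_n) : rel 'I_n :=
  fun x y => (x != y) && ~~ e x y.

Definition split_graph (n : nat) (e : rel 'I_n) : Prop :=
  exists K : {set 'I_n},
    (forall x y, x \in K -> y \in K -> x != y -> e x y) /\
    (forall x y, x \notin K -> y \notin K -> ~~ e x y).

Definition sparse_set (n : nat) (e : rel 'I_n) (k j : nat) (S : {set 'I_n}) : Prop :=
  #|S| = j /\ forall v, v \in S -> #|[set u in S | e v u]| <= k.

Definition dense_set (n : nat) (e : rel 'I_n) (k i : nat) (S : {set 'I_n}) : Prop :=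
  sparse_set (compl_graph e) k i S.

Definition split_ramsey_prop (k i j n : nat) : Prop :=
  forall e : rel 'I_n, simple_graph e -> split_graph e ->
    (exists S, dense_set e k i S) \/ (exists S, sparse_set e k j S).

Definition split_ramsey_number_is (k i j n : nat) : Prop :=
  split_ramsey_prop k i j n /\ forall m, m < n -> ~ split_ramsey_prop k i j m.

(* Main.v *)
Require Import Defs.
From mathcomp Require Import all_boot zify.
Set Implicit Arguments. Unset Strict Implicit. Unset Printing Implicit Defensive.

Section Gen.
Variable n : nat.
Implicit Types (e : rel 'I_n) (A B C K S U : {set 'I_n}).

Lemma sub_card_ex B j : j <= #|B| -> exists2 S : {set 'I_n}, S \subset B & #|S| = j.
Proof.
move=> hj; have : 0 < #|[set A : {set 'I_n} | A \subset B & #|A| == j]|.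
  by rewrite cards_draws bin_gt0.
case/card_gt0P=> S; rewrite inE => /andP[h1 /eqP h2]; by exists S.
Qed.

Lemma LS e k B C : irreflexive e -> (forall x y, x \in B -> y \in B -> ~~ e x y) ->
  [disjoint C & B] -> #|C| <= k ->
  (forall c, c \in C -> #|C| + #|[set u in B | e c u]| <= k.+1) ->
  sparse_set e k (#|C| + #|B|) (C :|: B).
Proof.
move=> irr ind dis hC hc; split.
  by rewrite cardsU (disjoint_setI0 dis) cards0 subn0.
move=> v; rewrite inE => /orP[vC|vB].
- rewrite -ltnS; apply: leq_trans (hc v vC); rewrite (cardsD1 v C) vC add1n addSn ltnS.
  apply: leq_trans (leq_card_setU _ _); apply: subset_leq_card; apply/subsetP=> w.
  rewrite !inE => /andP[/orP[wC|wB] ev].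
    have wv : w != v by apply/eqP=> wv; subst w; rewrite irr in ev.
    by rewrite wC wv.
  by rewrite wB ev orbT.
- apply: leq_trans hC; apply: subset_leq_card; apply/subsetP=> w.
  rewrite !inE => /andP[/orP[//|wB] ev]; by rewrite (negbTE (ind _ _ vB wB)) in ev.
Qed.

Lemma sparse_ext e e' k j S : (forall x y, e x y = e' x y) -> sparse_set e k j S -> sparse_set e' k j S.
Proof.
move=> h [h1 h2]; split=> // v vS; apply: leq_trans (h2 v vS); apply: subset_leq_card.
by apply/subsetP=> u; rewrite !inE h.
Qed.

Lemma L0s e k j B : (forall x y, x \in B -> y \in B -> ~~ e x y) -> j <= #|B| ->
  exists S, sparse_set e k j S.
Proof.
move=> ind /sub_card_ex [S sSB cS]; exists S; split=> // v vS.
rewrite (_ : [set u in S | e v u] = set0) ?cards0 //; apply/setP=> u; rewrite !inE.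
apply/negbTE; rewrite negb_and; case uS: (u \in S) => //=.
by apply: ind; apply: (subsetP sSB).
Qed.

Definition dd e A v := #|[set u in A | e v u]|.

Lemma dcount e A B : symmetric e -> \sum_(c in A) dd e B c = \sum_(u in B) dd e A u.
Proof.
move=> sym.
have E : forall X v, dd e X v = \sum_(u in X) (e v u : nat).
  move=> X v; rewrite /dd -sum1_card big_mkcond [RHS]big_mkcond /=.
  by apply: eq_bigr => u _; rewrite inE; case: (u \in X); case: (e v u).
rewrite (eq_bigr _ (fun c _ => E B c)) (eq_bigr _ (fun c _ => E A c)) exchange_big /=.
by apply: eq_bigr => u _; apply: eq_bigr => c _; rewrite sym.
Qed.


Definition clique e K := forall x y, x \in K -> y \in K -> x != y -> e x y.
Definition indep e K := forall x y, x \in K -> y \in K -> ~~ e x y.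

Lemma LD e k K U : irreflexive e -> clique e K -> [disjoint U & K] -> #|U| <= k ->
  (forall u, u \in U -> #|U| + #|K| <= k.+1 + dd e K u) ->
  dense_set e k (#|U| + #|K|) (U :|: K).
Proof.
move=> irr cl dis hU hu; apply: LS => //.
- by move=> x; rewrite /compl_graph eqxx.
- move=> x y xK yK; rewrite /compl_graph negb_and negbK.
  by case: eqP => [//|/eqP xy]; rewrite (cl _ _ xK yK xy).
- move=> u uU; have := hu u uU.
  have uK : u \notin K by rewrite (disjointFr dis uU).
  suff : #|[set c in K | compl_graph e u c]| + dd e K u <= #|K| by lia.
  have -> : #|K| = #|K :&: [set c | e u c]| + #|K :\: [set c | e u c]| by rewrite cardsID.
  rewrite addnC leq_add //; apply: subset_leq_card; apply/subsetP=> c; rewrite !inE.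
    by move=> /andP[-> ->].
  by case/andP=> -> /andP[_ ->].
Qed.

Lemma noDense e k i d K : indep e (~: K) -> #|K| < i -> k + d + 2 <= i ->
  (forall u, u \notin K -> dd e K u <= d) -> ~ exists S, dense_set e k i S.
Proof.
move=> ind hK hi hd [S [cS hS]].
have : ~~ (S \subset K) by apply/negP=> /subset_leq_card; lia.
case/subsetPn=> u uS uK.
have := hS u uS; have := hd u uK.
have h1 : #|S :\ u| + 1 = i by rewrite -cS (cardsD1 u S) uS addnC.
have h2 : #|S :\ u| <= #|[set w in S | compl_graph e u w]| + dd e K u.
  apply: leq_trans (leq_card_setU _ _); apply: subset_leq_card; apply/subsetP=> w.
  rewrite !inE => /andP[wu wS]; rewrite wS /= /compl_graph eq_sym wu /=.
  case euw: (e u w); rewrite ?orbT //.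
  case wK: (w \in K); rewrite ?orbT //.
  by have := ind u w; rewrite !inE uK wK euw => /(_ isT isT).
lia.
Qed.

Lemma noSparse e k j K b : #|~: K| = b -> clique e K -> indep e (~: K) ->
  #|[set c in K | dd e (~: K) c + j <= k.+1 + b]| + b < j ->
  ~ exists S, sparse_set e k j S.
Proof.
move=> hb cl ind hH [S [cS hS]].
set C := S :&: K.
have sub : C \subset [set c in K | dd e (~: K) c + j <= k.+1 + b].
  apply/subsetP=> c; rewrite inE => /andP[cS' cK]; rewrite inE cK /=.
  set NI := [set u in ~: K | e c u].
  have f1 : #|C| = 1 + #|C :\ c| by rewrite (cardsD1 c C) !inE cS' cK.
  have f2 : #|S :&: ~: K| + #|S :\: ~: K| = j by rewrite cardsID.
  have f2' : S :\: ~: K = C by apply/setP=> x; rewrite !inE negbK andbC.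
  have f3 : #|NI :&: S| + #|NI :\: S| = dd e (~: K) c by rewrite cardsID.
  have f4 : #|NI :\: S| <= #|~: K :\: S|.
    by apply: subset_leq_card; apply/subsetP=> x; rewrite !inE => /andP[-> /andP[-> _]].
  have f5 : #|~: K :&: S| + #|~: K :\: S| = b by rewrite cardsID; exact: hb.
  have f5' : #|~: K :&: S| = #|S :&: ~: K| by rewrite setIC.
  have f6 : #|(C :\ c) :|: (NI :&: S)| = #|C :\ c| + #|NI :&: S|.
    rewrite cardsU (_ : (C :\ c) :&: (NI :&: S) = set0) ?cards0 ?subn0 //.
    by apply/setP=> x; rewrite !inE; case: (x \in K); rewrite /= ?andbF ?andbT.
  have f7 : #|(C :\ c) :|: (NI :&: S)| <= #|[set u in S | e c u]|.
    apply: subset_leq_card; apply/subsetP=> x; rewrite !inE.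
    case/orP=> [/andP[xc /andP[xS xK]]|/andP[/andP[_ ecx] xS]]; rewrite xS //=.
    by apply: cl; rewrite // eq_sym.
  have := hS c cS'; rewrite f2' in f2; lia.
have := subset_leq_card sub.
have : #|S :&: ~: K| <= b by rewrite -hb; apply: subset_leq_card; apply: subsetIr.
have : #|S :&: ~: K| + #|S :\: ~: K| = j by rewrite cardsID.
have -> : S :\: ~: K = C by apply/setP=> x; rewrite !inE negbK andbC.
lia.
Qed.


Lemma disjP A B : (forall x, x \in A -> x \notin B) -> [disjoint A & B].
Proof. by move=> h; rewrite disjoint_subset; apply/subsetP=> x /h; rewrite inE. Qed.

Section Split.
Variables (e : rel 'I_n) (K : {set 'I_n}).
Hypotheses (sym : symmetric e) (irr : irreflexive e) (cl : clique e K) (ind : indep e (~: K)).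

Lemma indc : indep (compl_graph e) K.
Proof.
move=> x y xK yK; rewrite /compl_graph negb_and negbK.
by case: eqP => [//|/eqP xy]; rewrite (cl xK yK xy).
Qed.

Lemma T0d k i : i <= #|K| -> exists S, dense_set e k i S.
Proof. exact: L0s indc. Qed.

Lemma T0s k j : j <= #|~: K| -> exists S, sparse_set e k j S.
Proof. exact: L0s ind. Qed.

Lemma T1d k i u : u \notin K -> #|K| + 1 = i -> 1 <= k -> #|K| <= k + dd e K u ->
  exists S, dense_set e k i S.
Proof.
move=> uK hi hk hu; exists ([set u] :|: K); rewrite -hi addnC -(cards1 u).
apply: LD => //; first by apply: disjP=> x; rewrite inE => /eqP ->.
  by rewrite cards1.
by move=> x; rewrite inE cards1 => /eqP ->; lia.
Qed.

Lemma T2d k i u v : u \notin K -> v \notin K -> u != v -> #|K| + 2 = i -> 2 <= k ->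
  #|K| + 1 <= k + dd e K u -> #|K| + 1 <= k + dd e K v ->
  exists S, dense_set e k i S.
Proof.
move=> uK vK uv hi hk hu hv; exists ([set u; v] :|: K).
have c2 : #|[set u; v]| = 2 by rewrite cards2 uv.
rewrite -hi addnC -c2.
apply: LD => //; first by apply: disjP=> x; rewrite !inE => /orP[] /eqP ->.
  by rewrite c2.
by move=> x; rewrite !inE c2 => /orP[] /eqP ->; lia.
Qed.

Lemma T1s k j c : c \in K -> #|~: K| + 1 = j -> 1 <= k -> dd e (~: K) c <= k ->
  exists S, sparse_set e k j S.
Proof.
move=> cK hj hk hc; exists ([set c] :|: ~: K); rewrite -hj addnC -(cards1 c).
apply: LS => //; first by apply: disjP=> x; rewrite !inE => /eqP ->; rewrite negbK.
  by rewrite cards1.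
by move=> x; rewrite inE cards1 => /eqP ->; rewrite /dd in hc; lia.
Qed.

Lemma T2s k j c d : c \in K -> d \in K -> c != d -> #|~: K| + 2 = j -> 2 <= k ->
  dd e (~: K) c < k -> dd e (~: K) d < k -> exists S, sparse_set e k j S.
Proof.
move=> cK dK cd hj hk hc hd; exists ([set c; d] :|: ~: K).
have c2 : #|[set c; d]| = 2 by rewrite cards2 cd.
rewrite -hj addnC -c2.
apply: LS => //; first by apply: disjP=> x; rewrite !inE => /orP[] /eqP ->; rewrite negbK.
  by rewrite c2.
by move=> x; rewrite !inE c2 => /orP[] /eqP ->; rewrite /dd in hc hd; lia.
Qed.

Lemma ddK u : dd e K u <= #|K|.
Proof. by apply: subset_leq_card; apply/subsetP=> x; rewrite inE => /andP[]. Qed.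

End Split.

End Gen.

Section UB.
Variable n : nat.

Lemma prep (e : rel 'I_n) : simple_graph e -> split_graph e ->
  exists K : {set 'I_n}, [/\ symmetric e, irreflexive e, clique e K, indep e (~: K) &
     #|K| + #|~: K| = n].
Proof.
move=> [sym irr] [K [clK inK]]; exists K; split => //.
  by move=> x y; rewrite !inE; apply: inK.
by rewrite cardsC card_ord.
Qed.

Lemma ub1 k i j : 1 <= k -> n + 2 = i + j ->
  (forall a b, a + 1 = i -> b + 1 = j -> b * (a - k.+1) < a * k.+1) ->
  split_ramsey_prop k i j n.
Proof.
move=> hk hn hc e hs hsp; have [K [sym irr cl ind hab]] := prep hs hsp.
case: (leqP i #|K|) => [h|hi]; first by left; apply: (T0d cl).
case: (leqP j #|~: K|) => [h|hj]; first by right; apply: (T0s ind).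
have ha : #|K| + 1 = i by lia.
have hb : #|~: K| + 1 = j by lia.
case: (boolP [exists u in ~: K, #|K| <= k + dd e K u]).
  case/existsP=> u /andP[]; rewrite inE => uK h; left; exact: (T1d irr cl uK ha hk h).
rewrite negb_exists => /forallP hu.
case: (boolP [exists c in K, dd e (~: K) c <= k]).
  case/existsP=> c /andP[cK h]; right; exact: (T1s irr ind cK hb hk h).
rewrite negb_exists => /forallP hcc.
have s1 : #|K| * k.+1 <= \sum_(c in K) dd e (~: K) c.
  rewrite -sum_nat_const; apply: leq_sum => c cK; have := hcc c; rewrite cK /=; lia.
have s2 : \sum_(u in ~: K) dd e K u <= #|~: K| * (#|K| - k.+1).
  rewrite -sum_nat_const; apply: leq_sum => u uK; have := hu u; rewrite uK /=; lia.
have := hc _ _ ha hb; rewrite (dcount _ _ sym) in s1; lia.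
Qed.

Lemma ub2 j : 6 <= j <= 7 -> n = j + 2 -> split_ramsey_prop 2 5 j n.
Proof.
move=> hj hn e hs hsp; have [K [sym irr cl ind hab]] := prep hs hsp.
case: (leqP 5 #|K|) => [h|hi]; first by left; apply: (T0d cl).
case: (leqP j #|~: K|) => [h|hjb]; first by right; apply: (T0s ind).
have hsum := dcount K (~: K) sym.
case: (ltnP #|K| 4) => ha.
-
  have ha3 : #|K| = 3 by lia.
  have hb : #|~: K| + 1 = j by lia.
  set H := [set u | 2 <= dd e K u].
  case: (ltnP 1 #|~: K :&: H|) => hH.
    case/card_gt1P: hH => u [v [uH vH uv]].
    move: uH vH; rewrite !inE => /andP[uK hu] /andP[vK hv].
    left; apply: (T2d irr cl uK vK uv) => //; lia.
  case: (boolP [exists c in K, dd e (~: K) c <= 2]).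
    case/existsP=> c /andP[cK h]; right; by apply: (T1s irr ind cK).
  rewrite negb_exists => /forallP hcc.
  have s1 : #|K| * 3 <= \sum_(c in K) dd e (~: K) c.
    rewrite -sum_nat_const; apply: leq_sum => c cK; have := hcc c; rewrite cK /=; lia.
  have s2 : \sum_(u in ~: K) dd e K u <= #|~: K :&: H| * 3 + #|~: K :\: H| * 1.
    rewrite (big_setID H) /= -!sum_nat_const; apply: leq_add; apply: leq_sum => u.
      by move=> _; rewrite -ha3; apply: ddK.
    by rewrite !inE => /andP[] /negP hu _; lia.
  have s3 : #|~: K :&: H| + #|~: K :\: H| = #|~: K| by rewrite cardsID.
  lia.
-
  have ha4 : #|K| = 4 by lia.
  have hb : #|~: K| + 2 = j by lia.
  case: (boolP [exists u in ~: K, 2 <= dd e K u]).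
    case/existsP=> u /andP[]; rewrite inE => uK h; left.
    by apply: (T1d irr cl uK) => //; lia.
  rewrite negb_exists => /forallP hu.
  set L := [set c | dd e (~: K) c <= 1].
  case: (ltnP 1 #|K :&: L|) => hL.
    case/card_gt1P: hL => c [d [cL dL cd]].
    move: cL dL; rewrite !inE => /andP[cK hc] /andP[dK hd].
    by right; apply: (T2s irr ind cK dK cd hb).
  have s1 : #|K :\: L| * 2 <= \sum_(c in K) dd e (~: K) c.
    rewrite (big_setID L) /= -sum_nat_const; apply: leq_trans (leq_addl _ _).
    by apply: leq_sum => c; rewrite !inE => /andP[] /negP hc _; lia.
  have s2 : \sum_(u in ~: K) dd e K u <= #|~: K| * 1.
    rewrite -sum_nat_const; apply: leq_sum => u uK; have := hu u; rewrite uK /=; lia.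
  have s3 : #|K :&: L| + #|K :\: L| = #|K| by rewrite cardsID.
  lia.
Qed.

End UB.

Lemma transfer m m' (f : 'I_m -> 'I_m') (finj : injective f) (e : rel 'I_m') (e' : rel 'I_m) k j S :
  (forall x y, e' x y = e (f x) (f y)) -> sparse_set e' k j S -> sparse_set e k j (f @: S).
Proof.
move=> he [cS hS]; split; first by rewrite card_imset.
move=> v /imsetP[v' v'S ->]; apply: leq_trans (hS v' v'S).
rewrite -(card_imset _ finj); apply: subset_leq_card; apply/subsetP=> u.
rewrite inE => /andP[/imsetP[u' u'S ->] h]; apply: imset_f.
by rewrite inE u'S he.
Qed.

Lemma mono k i j m : split_ramsey_prop k i j m -> split_ramsey_prop k i j m.+1.
Proof.
move=> hp e [sym irr] [K [clK inK]].
pose f := widen_ord (leqnSn m).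
have finj : injective f by move=> x y /(congr1 val) h; apply: val_inj; exact: h.
pose e' : rel 'I_m := fun x y => e (f x) (f y).
have hs' : simple_graph e' by split; [move=> x y; apply: sym | move=> x; apply: irr].
have hsp' : split_graph e'.
  exists (f @^-1: K); split=> x y; rewrite !inE; last exact: inK.
  by move=> xK yK xy; apply: clK => //; rewrite (inj_eq finj).
case: (hp e' hs' hsp').
- case=> S hS; left; exists (f @: S); apply: (transfer finj _ hS) => x y.
  by rewrite /compl_graph (inj_eq finj).
- case=> S hS; right; exists (f @: S); exact: (transfer finj _ hS).
Qed.

Lemma mono_le k i j m p : m <= p -> split_ramsey_prop k i j m -> split_ramsey_prop k i j p.
Proof.
move=> /subnK <-; elim: (p - m) => [//|d IH] h; rewrite addSn; exact: mono (IH h).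
Qed.

Definition g (a : nat) (adj : seq (nat * nat)) (x y : nat) : bool :=
  (x != y) && [|| (x < a) && (y < a), (x < a) && ((x, y) \in adj)
                | (y < a) && ((y, x) \in adj)].

Definition mkg (n a : nat) (adj : seq (nat * nat)) : rel 'I_n := fun x y => g a adj x y.

Lemma card_iota n (Q : 'I_n -> bool) (q : nat -> bool) :
  (forall x : 'I_n, Q x = q x) -> #|[set x | Q x]| = count q (iota 0 n).
Proof.
move=> h; rewrite -val_enum_ord count_map cardE /enum_mem size_filter.
rewrite (@eq_filter _ _ predT) ?filter_predT //.
by apply: eq_count => x /=; rewrite !inE h.
Qed.

Definition cntK n a adj u := count (fun x => (x < a) && g a adj u x) (iota 0 n).
Definition cntI n a adj c := count (fun x => ~~ (x < a) && g a adj c x) (iota 0 n).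

Definition lbcond n a adj k i j d :=
  let na := count (fun x => x < a) (iota 0 n) in
  [&& na < i, k + d + 2 <= i, all (fun u => (u < a) || (cntK n a adj u <= d)) (iota 0 n) &
   count (fun c => (c < a) && (cntI n a adj c + j <= k.+1 + (n - na))) (iota 0 n) + (n - na) < j].

Lemma lb (n a : nat) adj k i j d : lbcond n a adj k i j d -> ~ split_ramsey_prop k i j n.
Proof.
rewrite /lbcond; set na := count _ _.
move=> /and4P[h1 h2 /allP h3 h4] hp.
pose e := @mkg n a adj; pose K := [set x : 'I_n | x < a].
have hK : #|K| = na by apply: card_iota.
have hb : #|~: K| = n - na by have := cardsC K; rewrite card_ord hK; lia.
have hdK u : dd e K u = cntK n a adj u by apply: card_iota => x; rewrite inE.
have hdI c : dd e (~: K) c = cntI n a adj c by apply: card_iota => x; rewrite !inE.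
have sym : symmetric e.
  move=> x y; rewrite /e /mkg /g (eq_sym (val y)).
  by case: (x < a); case: (y < a); rewrite /= ?orbF ?orbT // orbC.
have irr : irreflexive e by move=> x; rewrite /e /mkg /g eqxx.
have cl : clique e K by move=> x y; rewrite !inE /e /mkg /g => -> -> ->.
have ind : indep e (~: K).
  by move=> x y; rewrite !inE /e /mkg /g -!leqNgt => xa ya; rewrite !ltnNge xa ya /= andbF.
have [] := hp e (conj sym irr).
- by exists K; split; [exact: cl | move=> x y xK yK; apply: ind; rewrite inE].
- apply: (@noDense _ e k i d K ind); first by rewrite hK.
    by [].
  move=> u uK; rewrite hdK.
  have := h3 u; rewrite mem_iota add0n ltn_ord => /(_ isT).
  by move: uK; rewrite inE => /negbTE ->.
- apply: (noSparse hb cl ind).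
  rewrite (_ : #|_| = count (fun c => (c < a) && (cntI n a adj c + j <= k.+1 + (n - na))) (iota 0 n)) //.
  by apply: card_iota => x; rewrite !inE hdI.
Qed.


Lemma finish k i j n : split_ramsey_prop k i j n.+1 -> ~ split_ramsey_prop k i j n ->
  split_ramsey_number_is k i j n.+1.
Proof.
move=> h1 h2; split=> // m hm hp; apply: h2; apply: (mono_le _ hp); lia.
Qed.

Ltac ubc a0 b0 := move=> a b ha hb; (have -> : a = a0 by lia); (have -> : b = b0 by lia); by [].

Definition adjA := [:: (0,3);(1,4)].
Definition adjB := [:: (0,5);(1,5);(1,6);(2,6);(2,7);(3,7);(3,8);(0,8)].
Definition adjC := [:: (0,4);(1,5)].
Definition adjD := [:: (0,4);(0,5);(1,6);(1,7);(2,8);(2,9)].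

Theorem theorem6p4 :
  (split_ramsey_number_is 1 4 5 7 /\ split_ramsey_number_is 1 4 6 8) /\
  (split_ramsey_number_is 2 6 7 11 /\ split_ramsey_number_is 2 6 8 12) /\
  (split_ramsey_number_is 2 5 6 8 /\ split_ramsey_number_is 2 5 7 9) /\
  (forall j : nat, 8 <= j <= 12 -> split_ramsey_number_is 2 5 j (j + 3)).
Proof.
split; [split|split; [split|split; [split|]]].
- apply: finish; first by (apply: (@ub1 7) => //; ubc 3 4).
  by apply: (@lb 6 3 adjA 1 4 5 1); vm_compute.
- apply: finish; first by (apply: (@ub1 8) => //; ubc 3 5).
  by apply: (@lb 7 3 adjA 1 4 6 1); vm_compute.
- apply: finish; first by (apply: (@ub1 11) => //; ubc 5 6).
  by apply: (@lb 10 5 adjB 2 6 7 2); vm_compute.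
- apply: finish; first by (apply: (@ub1 12) => //; ubc 5 7).
  by apply: (@lb 11 5 adjB 2 6 8 2); vm_compute.
- apply: finish; first by apply: (@ub2 8 6).
  by apply: (@lb 7 4 adjC 2 5 6 1); vm_compute.
- apply: finish; first by apply: (@ub2 9 7).
  by apply: (@lb 8 4 adjC 2 5 7 1); vm_compute.
- move=> j hj.
  have : j = 8 \/ j = 9 \/ j = 10 \/ j = 11 \/ j = 12 by lia.
  case=> [->|[->|[->|[->|->]]]]; apply: finish.
  + by (apply: (@ub1 11) => //; ubc 4 7).
  + by apply: (@lb 10 4 adjD 2 5 8 1); vm_compute.
  + by (apply: (@ub1 12) => //; ubc 4 8).
  + by apply: (@lb 11 4 adjD 2 5 9 1); vm_compute.
  + by (apply: (@ub1 13) => //; ubc 4 9).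
  + by apply: (@lb 12 4 adjD 2 5 10 1); vm_compute.
  + by (apply: (@ub1 14) => //; ubc 4 10).
  + by apply: (@lb 13 4 adjD 2 5 11 1); vm_compute.
  + by (apply: (@ub1 15) => //; ubc 4 11).
  + by apply: (@lb 14 4 adjD 2 5 12 1); vm_compute.
Qed.
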